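(* If the communication graph of an SCS is a tree, then the system has a single ring.
   Context: Let $T=\{C_1,\dots,C_n\}$ be pairwise disjoint unit circles in the plane (trajectories) and $\epsilon<0.5$ a communication range. The graph of potential links $G_\epsilon(T)$ has the circle centers as nodes and an edge $\{i,j\}$ whenever the centers of $C_i,C_j$ are at distance at most $2+\epsilon$; it is assumed connected. Points of a circle are identified with angles (modulo $2\pi$), and a robot traverses a circle in one time unit. A schedule is a pair $(f,g)$, $f:T\to[0,2\pi)$, $g:T\to\{-1,1\}$ ($1$ = counterclockwise); the robot on $C_i$ is at angle $f(C_i)+2\pi g(C_i)t$ at time $t$. A communication graph $G=(V,E)$ is a connected spanning subgraph of $G_\epsilon(T)$. The link position $\phi_{ij}$ is the point of $C_i$ closest to $C_j$. A schedule is $G$-synchronized if for every $\{i,j\}\in E$ the robot on $C_i$ is at $\phi_{ij}$ exactly when the robot on $C_j$ is at $\phi_{ji}$. An SCS with communication graph $G$ consists of $n$ robots, one per circle, moving under a $G$-synchronized schedule with $g(C_i)=-g(C_j)$ for all $\{i,j\}\in E$. A ring of the SCS is the closed path (locus of points) visited by a robot that follows the assigned movement direction on each circle and always shifts to the neighboring circle (in $G$) at every link position it reaches; every arc of a circle between consecutive link positions lies on exactly one ring. *)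

(* Defs.v *)
From Stdlib Require Import Reals Relations.
From mathcomp Require Import all_boot.

Set Implicit Arguments.
Unset Strict Implicit.
Unset Printing Implicit Defensive.

Local Open Scope R_scope.

Definition point := (R * R)%type.

Definition dist (p q : point) : R :=
  sqrt ((fst p - fst q) ^ 2 + (snd p - snd q) ^ 2).

Definition on_circle (c : point) (th : R) : point :=
  (fst c + cos th, snd c + sin th).

Section SCS.
Variables (n : nat) (c : 'I_n -> point).

Definition pairwise_disjoint : Prop :=
  forall i j : 'I_n, i <> j ->
    forall th1 th2 : R, on_circle (c i) th1 <> on_circle (c j) th2.

Definition potential_link (eps : R) (i j : 'I_n) : Prop :=
  i <> j /\ dist (c i) (c j) <= 2 + eps.

Definition communication_graph (eps : R) (E : rel 'I_n) : Prop :=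
  (forall i j, E i j = E j i) /\
  (forall i, ~~ E i i) /\
  (forall i j, E i j -> potential_link eps i j) /\
  (forall i j, connect E i j).

Definition is_tree (E : rel 'I_n) : Prop :=
  (forall i j, connect E i j) /\
  (forall s : seq 'I_n, uniq s -> (3 <= size s)%N -> ~~ cycle E s).

Definition link_pos (i j : 'I_n) : point :=
  let d := dist (c i) (c j) in
  (fst (c i) + (fst (c j) - fst (c i)) / d,
   snd (c i) + (snd (c j) - snd (c i)) / d).

(* Schedule (f, g): f i in [0, 2pi), g i in {-1, 1} (1 = counterclockwise). *)
Definition schedule (f g : 'I_n -> R) : Prop :=
  forall i, 0 <= f i < 2 * PI /\ (g i = 1 \/ g i = -1).

Definition robot_pos (f g : 'I_n -> R) (i : 'I_n) (t : R) : point :=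
  on_circle (c i) (f i + 2 * PI * g i * t).

Definition synchronized (E : rel 'I_n) (f g : 'I_n -> R) : Prop :=
  forall i j, E i j -> forall t : R,
    robot_pos f g i t = link_pos i j <-> robot_pos f g j t = link_pos j i.

Definition SCS (eps : R) (E : rel 'I_n) (f g : 'I_n -> R) : Prop :=
  communication_graph eps E /\ schedule f g /\ synchronized E f g /\
  (forall i j, E i j -> g i = - g j).

(* A dart (i, j) with E i j stands for a robot that has
   just shifted from C_i to C_j at the link position phi_ji, and is about to
   traverse the arc of C_j that starts at phi_ji in direction g j.
   [ring_step g (i,j) (j,k)]: moving on C_j from phi_ji in direction g j, the
   first link position of C_j reached (after a positive time s <= 1) is
   phi_jk; the robot then shifts to C_k. *)
Definition ring_step (E : rel 'I_n) (g : 'I_n -> R)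
    (d1 d2 : 'I_n * 'I_n) : Prop :=
  let (i, j) := d1 in let (j', k) := d2 in
  j' = j /\ E i j /\ E j k /\
  exists alpha s : R,
    on_circle (c j) alpha = link_pos j i /\
    0 < s <= 1 /\
    on_circle (c j) (alpha + 2 * PI * g j * s) = link_pos j k /\
    (forall s' : R, 0 < s' < s -> forall k' : 'I_n, E j k' ->
        on_circle (c j) (alpha + 2 * PI * g j * s') <> link_pos j k').

Definition same_ring (E : rel 'I_n) (g : 'I_n -> R) (d1 d2 : 'I_n * 'I_n)
  : Prop := clos_refl_trans _ (ring_step E g) d1 d2.

Definition single_ring (E : rel 'I_n) (g : 'I_n -> R) : Prop :=
  forall d1 d2 : 'I_n * 'I_n, E d1.1 d1.2 -> E d2.1 d2.2 ->
    same_ring E g d1 d2.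

End SCS.

(* Main.v *)
Require Import Defs.
From Stdlib Require Import Reals Lra Lia Psatz ZArith ClassicalEpsilon Relations.
From mathcomp Require Import all_boot.
Local Open Scope R_scope.

Lemma unit_angle x y : x^2 + y^2 = 1 -> exists th, cos th = x /\ sin th = y.
Proof.
intros H.
assert (Hx : -1 <= x <= 1) by nra.
assert (Hs : sqrt (1 - x²) = Rabs y).
{ rewrite <- sqrt_Rsqr_abs. f_equal. unfold Rsqr. nra. }
destruct (Rle_or_lt 0 y) as [Hy|Hy].
- exists (acos x). split. apply cos_acos; auto.
  rewrite sin_acos; auto. rewrite Hs. apply Rabs_right. lra.
- exists (- acos x). split. rewrite cos_neg. apply cos_acos; auto.
  rewrite sin_neg sin_acos; auto. rewrite Hs. rewrite Rabs_left; lra.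
Qed.

Lemma circ_eq a b : cos a = cos b -> sin a = sin b ->
  exists z : Z, a = b + 2 * PI * IZR z.
Proof.
intros Hc Hs.
assert (H1 : cos (a - b) = 1).
{ rewrite cos_minus Hc Hs. pose proof (sin2_cos2 b). unfold Rsqr in *. lra. }
assert (H2 : sin ((a - b)/2) = 0).
{ pose proof (cos_2a_sin ((a-b)/2)) as H.
  replace (2 * ((a-b)/2)) with (a - b) in H by field. nra. }
destruct (sin_eq_0_0 _ H2) as [k Hk]. exists k. lra.
Qed.

Lemma cos_sin_periodZ x (z : Z) :
  cos (x + 2 * PI * IZR z) = cos x /\ sin (x + 2 * PI * IZR z) = sin x.
Proof.
destruct (Z_le_gt_dec 0 z) as [Hz|Hz].
- rewrite <- (Z2Nat.id z) by lia. rewrite <- INR_IZR_INZ.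
  replace (x + 2 * PI * INR (Z.to_nat z)) with (x + 2 * INR (Z.to_nat z) * PI) by ring.
  split; [apply cos_period | apply sin_period].
- set (m := Z.to_nat (- z)).
  assert (Hm : IZR z = - INR m).
  { unfold m. rewrite INR_IZR_INZ Z2Nat.id; [|lia]. rewrite opp_IZR. ring. }
  rewrite Hm.
  pose proof (cos_period (x + 2 * PI * - INR m) m) as A.
  pose proof (sin_period (x + 2 * PI * - INR m) m) as B.
  replace (x + 2 * PI * - INR m + 2 * INR m * PI) with x in A, B by ring.
  split; auto.
Qed.

Lemma sqrt_le2 X : 0 <= X -> sqrt X <= 2 -> X <= 4.
Proof. intros H0 H. pose proof (sqrt_sqrt X H0). pose proof (sqrt_pos X). nra. Qed.

Lemma INT n (c : 'I_n -> point) i j : pairwise_disjoint c -> i <> j ->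
  2 < Defs.dist (c i) (c j).
Proof.
intros Hd Hij. destruct (Rlt_or_le 2 (Defs.dist (c i) (c j))) as [H|H]; auto.
exfalso. unfold Defs.dist in H.
destruct (c i) as [xi yi] eqn:Ei. destruct (c j) as [xj yj] eqn:Ej. simpl in H.
set (dx := xj - xi). set (dy := yj - yi).
assert (H4 : dx^2 + dy^2 <= 4).
{ apply sqrt_le2. nra. replace (dx^2+dy^2) with ((xi - xj) ^ 2 + (yi - yj) ^ 2) by (unfold dx, dy; ring). auto. }
destruct (Req_dec (dx^2+dy^2) 0) as [Z|Z].
- assert (dx = 0) by nra. assert (dy = 0) by nra.
  apply (Hd i j Hij 0 0). unfold on_circle. rewrite Ei Ej. simpl.
  f_equal; unfold dx, dy in *; lra.
- set (d2 := dx^2+dy^2) in *.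
  assert (Hd2 : 0 < d2) by (unfold d2 in *; nra).
  set (t := sqrt (1/d2 - 1/4)).
  assert (Ht : t^2 = 1/d2 - 1/4).
  { unfold t. simpl. rewrite Rmult_1_r. apply sqrt_sqrt.
    assert (1/4 <= 1/d2) by (apply (Rmult_le_reg_l d2); [lra|]; field_simplify; lra). lra. }
  assert (Htd : t^2 * d2 = 1 - d2/4).
  { rewrite Ht. field. lra. }
  destruct (unit_angle (dx/2 - t*dy) (dy/2 + t*dx)) as [a1 [A1 B1]].
  { replace ((dx/2 - t*dy)^2 + (dy/2 + t*dx)^2) with (d2/4 + t^2*d2) by (unfold d2; field). lra. }
  destruct (unit_angle (-dx/2 - t*dy) (-dy/2 + t*dx)) as [a2 [A2 B2]].
  { replace ((-dx/2 - t*dy)^2 + (-dy/2 + t*dx)^2) with (d2/4 + t^2*d2) by (unfold d2; field). lra. }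
  apply (Hd i j Hij a1 a2). unfold on_circle. rewrite Ei Ej A1 B1 A2 B2. simpl.
  unfold dx, dy. f_equal; lra.
Qed.

Lemma dist_pos_sq (p q : point) : 0 < Defs.dist p q ->
  Defs.dist p q ^ 2 = (fst p - fst q)^2 + (snd p - snd q)^2.
Proof. intros _. unfold Defs.dist. apply pow2_sqrt. apply Rplus_le_le_0_compat; apply pow2_ge_0. Qed.

Lemma link_unit n (c : 'I_n -> point) i j : 0 < Defs.dist (c i) (c j) ->
  (fst (link_pos c i j) - fst (c i))^2 + (snd (link_pos c i j) - snd (c i))^2 = 1.
Proof.
intros H. pose proof (dist_pos_sq _ _ H) as S. unfold link_pos. cbn [fst snd].
set (d := Defs.dist (c i) (c j)) in *.
destruct (c i) as [xi yi]. destruct (c j) as [xj yj]. cbn [fst snd] in *.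
replace ((xi + (xj - xi) / d - xi) ^ 2 + (yi + (yj - yi) / d - yi) ^ 2)
  with (((xi - xj)^2 + (yi - yj)^2) / d^2) by (field; lra).
rewrite <- S. field. lra.
Qed.

Lemma LP n (c : 'I_n -> point) eps j k k' : pairwise_disjoint c -> eps < 1/2 ->
  j <> k -> j <> k' ->
  Defs.dist (c j) (c k) <= 2 + eps -> Defs.dist (c j) (c k') <= 2 + eps ->
  link_pos c j k = link_pos c j k' -> k = k'.
Proof.
intros Hd He Hk Hk' D1 D2 L.
destruct (@eqP _ k k') as [|Hne]; auto. exfalso.
pose proof (INT n c j k Hd Hk) as I1. pose proof (INT n c j k' Hd Hk') as I2.
pose proof (INT n c k k' Hd Hne) as I3.
assert (S1 := dist_pos_sq (c j) (c k)). specialize (S1 ltac:(lra)).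
assert (S2 := dist_pos_sq (c j) (c k')). specialize (S2 ltac:(lra)).
assert (S3 := dist_pos_sq (c k) (c k')). specialize (S3 ltac:(lra)).
unfold link_pos in L. injection L as L1 L2.
set (d := Defs.dist (c j) (c k)) in *. set (d' := Defs.dist (c j) (c k')) in *.
set (e := Defs.dist (c k) (c k')) in *.
destruct (c j) as [xj yj]. destruct (c k) as [xk yk]. destruct (c k') as [xl yl].
cbn [fst snd] in *.
set (wx := (xk - xj)/d) in *. set (wy := (yk - yj)/d) in *.
assert (L1' : wx = (xl - xj)/d') by lra.
assert (L2' : wy = (yl - yj)/d') by lra.
assert (X1 : xk - xj = d * wx) by (unfold wx; field; lra).
assert (X2 : xl - xj = d' * wx) by (rewrite L1'; field; lra).
assert (Y1 : yk - yj = d * wy) by (unfold wy; field; lra).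
assert (Y2 : yl - yj = d' * wy) by (rewrite L2'; field; lra).
assert (Ex : xk - xl = (d - d') * wx) by (rewrite Rmult_minus_distr_r; lra).
assert (Ey : yk - yl = (d - d') * wy) by (rewrite Rmult_minus_distr_r; lra).
assert (W : wx^2 + wy^2 = 1).
{ unfold wx, wy. replace ((xk - xj) / d) with (- ((xj - xk)/d)) by (field; lra).
  replace ((yk - yj) / d) with (- ((yj - yk)/d)) by (field; lra).
  replace ((- ((xj - xk) / d)) ^ 2 + (- ((yj - yk) / d)) ^ 2) with
   (((xj - xk)^2 + (yj - yk)^2) / d^2) by (field; lra). rewrite <- S1. field. lra. }
assert (e^2 = (d-d')^2).
{ rewrite S3. replace ((xk - xl)^2 + (yk - yl)^2) with ((d - d')^2 * (wx^2+wy^2)) by (rewrite Ex Ey; ring).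
  rewrite W. ring. }
nra.
Qed.

Set Implicit Arguments.
Unset Strict Implicit.

Definition theta n (c : 'I_n -> point) j k :=
  epsilon (inhabits 0) (fun th => on_circle (c j) th = link_pos c j k).

Lemma theta_spec n (c : 'I_n -> point) j k : 0 < Defs.dist (c j) (c k) ->
  on_circle (c j) (theta c j k) = link_pos c j k.
Proof.
intros H. unfold theta. apply epsilon_spec.
pose proof (link_unit n c j k H) as U.
destruct (unit_angle _ _ U) as [th [A B]]. exists th.
unfold on_circle. rewrite A B. destruct (link_pos c j k) as [p q]. cbn [fst snd].
f_equal; ring.
Qed.

Definition fracp x := x - IZR (Int_part x).
Lemma fracp_bound x : 0 <= fracp x < 1.
Proof. unfold fracp. pose proof (base_Int_part x). lra. Qed.

Definition Ppos n (c : 'I_n -> point) (g : 'I_n -> R) j k :=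
  fracp (g j * theta c j k / (2 * PI)).

Definition Dd n (c : 'I_n -> point) (g : 'I_n -> R) j i k :=
  if Rlt_dec (Ppos c g j i) (Ppos c g j k) then Ppos c g j k - Ppos c g j i
  else 1 + Ppos c g j k - Ppos c g j i.

Lemma on_circle_eq p x y : on_circle p x = on_circle p y <-> cos x = cos y /\ sin x = sin y.
Proof.
unfold on_circle. split.
- intros H. injection H as H1 H2. split; lra.
- intros [H1 H2]. rewrite H1 H2. reflexivity.
Qed.

Lemma bridge1 n (c : 'I_n -> point) (g : 'I_n -> R) j i k s :
  0 < Defs.dist (c j) (c k) -> (g j = 1 \/ g j = -1) ->
  on_circle (c j) (theta c j i + 2 * PI * g j * s) = link_pos c j k <->
  exists m : Z, Ppos c g j i + s = Ppos c g j k + IZR m.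
Proof.
intros Hk Hg. rewrite <- (theta_spec Hk). rewrite on_circle_eq.
unfold Ppos, fracp.
set (A := theta c j i). set (B := theta c j k).
pose proof PI_RGT_0 as HPI.
destruct Hg as [G|G]; rewrite G.
- set (Ii := Int_part (1 * A / (2 * PI))). set (Ik := Int_part (1 * B / (2 * PI))).
  split.
  + intros [C S]. destruct (circ_eq _ _ C S) as [z Hz].
    exists (Ik + z - Ii)%Z. rewrite minus_IZR plus_IZR.
    assert (A / (2*PI) + s = B / (2*PI) + IZR z).
    { replace A with (B + 2 * PI * IZR z - 2 * PI * 1 * s) by lra. field. lra. }
    replace (1 * A / (2 * PI)) with (A / (2*PI)) by (field; lra).
    replace (1 * B / (2 * PI)) with (B / (2*PI)) by (field; lra). lra.
  + intros [m Hm].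
    assert (E1 : A + 2 * PI * 1 * s = B + 2 * PI * IZR (m + Ii - Ik)).
    { rewrite minus_IZR plus_IZR.
      assert (A / (2*PI) + s = B / (2*PI) + IZR m + IZR Ii - IZR Ik).
      { replace (1 * A / (2 * PI)) with (A / (2*PI)) in Hm by (field; lra).
        replace (1 * B / (2 * PI)) with (B / (2*PI)) in Hm by (field; lra). lra. }
      replace A with (2 * PI * (A / (2*PI))) by (field; lra).
      replace (A/(2*PI)) with (B/(2*PI) + IZR m + IZR Ii - IZR Ik - s) by lra.
      field. lra. }
    rewrite E1. apply cos_sin_periodZ.
- set (Ii := Int_part (-1 * A / (2 * PI))). set (Ik := Int_part (-1 * B / (2 * PI))).
  split.
  + intros [C S]. destruct (circ_eq _ _ C S) as [z Hz].
    exists (Ik - z - Ii)%Z. rewrite !minus_IZR.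
    assert (-1 * A / (2*PI) + s = -1 * B / (2*PI) - IZR z).
    { replace A with (B + 2 * PI * IZR z - 2 * PI * -1 * s) by lra. field. lra. }
    lra.
  + intros [m Hm].
    assert (E1 : A + 2 * PI * -1 * s = B + 2 * PI * IZR (- m - Ii + Ik)).
    { rewrite plus_IZR minus_IZR opp_IZR.
      assert (-1 * A / (2*PI) + s = -1 * B / (2*PI) + IZR m + IZR Ii - IZR Ik) by lra.
      replace A with (-1 * 2 * PI * (-1 * A / (2*PI))) by (field; lra).
      replace (-1 * A/(2*PI)) with (-1 * B/(2*PI) + IZR m + IZR Ii - IZR Ik - s) by lra.
      field. lra. }
    rewrite E1. apply cos_sin_periodZ.
Qed.

Lemma IZR_01 (m : Z) : -1 < IZR m < 2 -> m = 0%Z \/ m = 1%Z.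
Proof. intros [H1 H2]. apply lt_IZR in H1. apply lt_IZR in H2. lia. Qed.

Lemma frac_D a b s : 0 <= a < 1 -> 0 <= b < 1 -> 0 < s <= 1 ->
  (exists m : Z, a + s = b + IZR m) <->
  s = (if Rlt_dec a b then b - a else 1 + b - a).
Proof.
intros Ha Hb Hs. split.
- intros [m Hm]. assert (-1 < IZR m < 2) by lra.
  destruct (IZR_01 H) as [-> | ->]; destruct (Rlt_dec a b); simpl in *; lra.
- destruct (Rlt_dec a b) as [L|L]; intros ->.
  + exists 0%Z. simpl. lra.
  + exists 1%Z. simpl. lra.
Qed.

Lemma fin_min (T : finType) (P : T -> Prop) (F : T -> R) x0 : P x0 ->
  exists x, P x /\ forall y, P y -> F x <= F y.
Proof.
intros H0.
assert (G : forall s : seq T, exists x, P x /\ forall y, y \in s -> P y -> F x <= F y).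
{ induction s as [|a s IH].
  - exists x0. split; auto. intros y Hy. by rewrite in_nil in Hy.
  - destruct IH as [x [Px Hx]].
    destruct (classic (P a)) as [Pa|Pa].
    + destruct (Rle_dec (F x) (F a)) as [L|L].
      * exists x. split; auto. intros y Hy Py. rewrite in_cons in Hy.
        case/orP: Hy => [/eqP ->|Hy]; auto.
      * exists a. split; auto. intros y Hy Py. rewrite in_cons in Hy.
        case/orP: Hy => [/eqP ->|Hy]. lra. specialize (Hx y Hy Py). lra.
    + exists x. split; auto. intros y Hy Py. rewrite in_cons in Hy.
      case/orP: Hy => [/eqP Ey|Hy]; auto. subst y. contradiction. }
destruct (G (enum T)) as [x [Px Hx]]. exists x. split; auto.
intros y Py. apply Hx; auto. by rewrite mem_enum.
Qed.

Definition Good n (c : 'I_n -> point) eps (E : rel 'I_n) (g : 'I_n -> R) : Prop :=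
  pairwise_disjoint c /\ eps < 1/2 /\ (forall i j, E i j = E j i) /\
  (forall i, ~~ E i i) /\ (forall i j, E i j -> potential_link c eps i j) /\
  (forall i, g i = 1 \/ g i = -1).

Definition sg n (c : 'I_n -> point) (E : rel 'I_n) (g : 'I_n -> R) j i :=
  epsilon (inhabits i) (fun k => E j k /\ forall k', E j k' -> Dd c g j i k <= Dd c g j i k').

Section Geo.
Variables (n : nat) (c : 'I_n -> point) (eps : R) (E : rel 'I_n) (g : 'I_n -> R).
Hypothesis HG : Good c eps E g.

Lemma nbd j k : E j k -> 0 < Defs.dist (c j) (c k).
Proof.
intros H. destruct HG as [Hd [_ [_ [_ [Hp _]]]]]. destruct (Hp _ _ H) as [Hne _].
pose proof (INT n c j k Hd Hne). lra.
Qed.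

Lemma Gg j : g j = 1 \/ g j = -1.
Proof. destruct HG as [_ [_ [_ [_ [_ H]]]]]. apply H. Qed.

Lemma Pinj j k k' : E j k -> E j k' -> Ppos c g j k = Ppos c g j k' -> k = k'.
Proof.
intros Hk Hk' HP.
destruct HG as [Hd [He [_ [_ [Hp _]]]]].
destruct (Hp _ _ Hk) as [N1 D1]. destruct (Hp _ _ Hk') as [N2 D2].
apply (LP n c eps j k k' Hd He N1 N2 D1 D2).
destruct (@bridge1 n c g j k k 1 (nbd Hk) (Gg j)) as [_ B1].
destruct (@bridge1 n c g j k k' 1 (nbd Hk') (Gg j)) as [_ B2].
rewrite <- B1. apply B2. exists 1%Z. rewrite HP. simpl. ring.
exists 1%Z. simpl. ring.
Qed.

Lemma Dd_bound j i k : 0 < Dd c g j i k <= 1.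
Proof.
unfold Dd. pose proof (fracp_bound (g j * theta c j i / (2 * PI))).
pose proof (fracp_bound (g j * theta c j k / (2 * PI))).
unfold Ppos. destruct Rlt_dec; cbn [is_left]; split; lra.
Qed.

Lemma Dd_self j i : Dd c g j i i = 1.
Proof. unfold Dd. destruct Rlt_dec; cbn [is_left]; lra. Qed.

Lemma Dd_lt1 j i k : E j i -> E j k -> i <> k -> Dd c g j i k < 1.
Proof.
intros Hi Hk Hne. assert (Ppos c g j i <> Ppos c g j k) by (intro; apply Hne; apply (Pinj Hi Hk); auto).
unfold Dd. pose proof (fracp_bound (g j * theta c j i / (2 * PI))).
pose proof (fracp_bound (g j * theta c j k / (2 * PI))).
unfold Ppos in *. destruct Rlt_dec; cbn [is_left]; lra.
Qed.

Lemma bridge j i k s : E j k -> 0 < s <= 1 ->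
  on_circle (c j) (theta c j i + 2 * PI * g j * s) = link_pos c j k <-> s = Dd c g j i k.
Proof.
intros Hk Hs. rewrite (@bridge1 n c g j i k s (nbd Hk) (Gg j)).
unfold Dd. apply frac_D; auto; apply fracp_bound.
Qed.

Lemma sg_spec j i : E j i -> E j (sg c E g j i) /\
  forall k', E j k' -> Dd c g j i (sg c E g j i) <= Dd c g j i k'.
Proof.
intros H. unfold sg. apply epsilon_spec.
apply (fin_min (P := fun k => E j k) (Dd c g j i) H).
Qed.

Lemma ring_step_sg i j : E i j -> ring_step c E g (i, j) (j, sg c E g j i).
Proof.
intros H. destruct HG as [_ [_ [Es _]]].
assert (H' : E j i) by (rewrite Es; auto).
destruct (sg_spec H') as [S1 S2].
simpl. split; [reflexivity|]. split; [auto|]. split; [auto|].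
exists (theta c j i), (Dd c g j i (sg c E g j i)).
split. apply theta_spec, nbd, H'.
split. apply Dd_bound.
split. apply (bridge i S1 (Dd_bound _ _ _)). reflexivity.
intros s' Hs' k' Hk' Hc.
apply (bridge i Hk') in Hc; [|pose proof (Dd_bound j i (sg c E g j i)); lra].
specialize (S2 k' Hk'). lra.
Qed.

Lemma Esymm i j : E i j -> E j i.
Proof. destruct HG as [_ [_ [Es _]]]. intros H. rewrite Es; auto. Qed.

Lemma fb j x : 0 <= Ppos c g j x < 1.
Proof. apply fracp_bound. Qed.

Lemma sg_inj j i i' : E i j -> E i' j -> sg c E g j i = sg c E g j i' -> i = i'.
Proof.
intros Hi Hi' Heq.
destruct (@eqP _ i i') as [|Hne]; auto. exfalso.
apply Esymm in Hi. apply Esymm in Hi'.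
destruct (sg_spec Hi) as [Sk M1]. destruct (sg_spec Hi') as [_ M2].
rewrite <- Heq in M2.
set (k := sg c E g j i) in *.
pose proof (M1 i' Hi') as A1. pose proof (M2 i Hi) as A2.
destruct (@eqP _ k i) as [Eki|Nki].
{ rewrite Eki Dd_self in A1. pose proof (Dd_lt1 Hi Hi' Hne). lra. }
destruct (@eqP _ k i') as [Eki'|Nki'].
{ rewrite Eki' Dd_self in A2. pose proof (Dd_lt1 Hi' Hi (not_eq_sym Hne)). lra. }
assert (P1 : Ppos c g j i <> Ppos c g j i') by (intro X; apply Hne; apply (Pinj Hi Hi' X)).
assert (P2 : Ppos c g j k <> Ppos c g j i) by (intro X; apply Nki; apply (Pinj Sk Hi X)).
assert (P3 : Ppos c g j k <> Ppos c g j i') by (intro X; apply Nki'; apply (Pinj Sk Hi' X)).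
pose proof (fb j i). pose proof (fb j i'). pose proof (fb j k).
unfold Dd in A1, A2.
destruct (Rlt_dec (Ppos c g j i) (Ppos c g j k)); destruct (Rlt_dec (Ppos c g j i) (Ppos c g j i'));
destruct (Rlt_dec (Ppos c g j i') (Ppos c g j k)); destruct (Rlt_dec (Ppos c g j i') (Ppos c g j i));
cbn [is_left] in *; lra.
Qed.

Lemma sg_cyc j (S : 'I_n -> Prop) i0 : S i0 -> (forall k, S k -> E k j) ->
  (forall k, S k -> S (sg c E g j k)) -> forall k, E k j -> S k.
Proof.
intros H0 HSE HSc k' Hk'.
destruct (classic (S k')) as [|NS]; auto. exfalso.
apply Esymm in Hk'.
set (P := Ppos c g j).
destruct (classic (exists i, S i /\ P i < P k')) as [[i0' Hi0]|NA].
- destruct (fin_min (P := fun i => S i /\ P i < P k') (fun i => - P i) Hi0) as [i [[Si Li] Mx]].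
  assert (Ei : E j i) by (apply Esymm; auto).
  destruct (sg_spec Ei) as [Es1 Ms].
  set (s := sg c E g j i) in *.
  assert (Ss : S s) by (apply HSc; auto).
  assert (Ns : P s <> P k') by (intro X; apply NS; rewrite <- (Pinj Es1 Hk' X); auto).
  pose proof (Ms k' Hk') as A. unfold Dd in A. fold P in A.
  pose proof (fb j s). pose proof (fb j i). pose proof (fb j k'). fold P in H, H1, H2.
  destruct (Rlt_dec (P i) (P s)); destruct (Rlt_dec (P i) (P k')); cbn [is_left] in A; try lra.
  assert (P s < P k') by lra.
  pose proof (Mx s (conj Ss H3)). lra.
- assert (Ge : forall i, S i -> P k' <= P i).
  { intros i Si. destruct (Rle_dec (P k') (P i)); auto. exfalso. apply NA. exists i. split; auto. lra. }
  destruct (fin_min (P := S) (fun i => - P i) H0) as [i [Si Mx]].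
  assert (Ei : E j i) by (apply Esymm; auto).
  destruct (sg_spec Ei) as [Es1 Ms].
  set (s := sg c E g j i) in *.
  assert (Ss : S s) by (apply HSc; auto).
  assert (Ns : P s <> P k') by (intro X; apply NS; rewrite <- (Pinj Es1 Hk' X); auto).
  assert (Ni : P i <> P k') by (intro X; apply NS; rewrite <- (Pinj Ei Hk' X); auto).
  pose proof (Ms k' Hk') as A. unfold Dd in A. fold P in A.
  pose proof (Ge i Si). pose proof (Ge s Ss). pose proof (Mx s Ss).
  destruct (Rlt_dec (P i) (P s)); destruct (Rlt_dec (P i) (P k')); cbn [is_left] in A; lra.
Qed.

End Geo.

Local Close Scope R_scope.
Unset Printing Implicit Defensive.

Definition Eexc n (E : rel 'I_n) (u v : 'I_n) : rel 'I_n :=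
  [rel x y | E x y && ~~ (((x == u) && (y == v)) || ((x == v) && (y == u)))].

Lemma ACY n (E : rel 'I_n) u v :
  (forall i, ~~ E i i) -> is_tree E -> E u v -> ~~ connect (Eexc E u v) v u.
Proof.
move=> Eirr [_ Hcyc] Huv; apply/negP => /connectP [p Hp Hl].
case/shortenP: Hp Hl => p' Hp' Hu' _ Hl'.
have Hne : p' <> [::].
  move=> Ep; move: Hl'; rewrite Ep /= => Euv; move: Huv; rewrite Euv.
  by move: (Eirr v) => /negbTE ->.
have Hsz : (3 <= size (v :: p'))%N.
  case: p' Hp' Hl' Hne Hu' => [|a [|b q]] //= Hp' Hl' _ _.
  move: Hp'; rewrite /= andbT -Hl' => /andP [_ ]; by rewrite !eqxx /= orbT.
apply: (negP (Hcyc _ Hu' Hsz)).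
rewrite /cycle rcons_path; apply/andP; split.
  by apply: sub_path Hp' => x y /andP [].
by rewrite -Hl'.
Qed.

Definition phi n (E : rel 'I_n) (sg : 'I_n -> 'I_n -> 'I_n) (d : 'I_n * 'I_n) :=
  if E d.1 d.2 then (d.2, sg d.2 d.1) else d.

Section Comb.
Variables (n : nat) (E : rel 'I_n) (sg : 'I_n -> 'I_n -> 'I_n).
Hypothesis Esym : forall i j, E i j = E j i.
Hypothesis Eirr : forall i, ~~ E i i.
Hypothesis Tree : is_tree E.
Hypothesis s1 : forall i j, E i j -> E j (sg j i).
Hypothesis s2 : forall j i i', E i j -> E i' j -> sg j i = sg j i' -> i = i'.
Hypothesis s3 : forall j (S : 'I_n -> Prop) i0, S i0 -> (forall k, S k -> E k j) ->
  (forall k, S k -> S (sg j k)) -> forall k, E k j -> S k.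

Local Notation ph := (phi E sg).

Lemma phi_inj : injective ph.
Proof.
move=> [a b] [a' b']; rewrite /phi /=.
case: (boolP (E a b)) => Hab; case: (boolP (E a' b')) => Hab'.
- case=> eb e; subst b'; by rewrite (s2 Hab Hab' e).
- case=> e1 e2; move: Hab'; rewrite -e1 -e2. by rewrite s1.
- case=> e1 e2; move: Hab; rewrite e1 e2. by rewrite s1.
- by [].
Qed.

Lemma phi_dart d : E d.1 d.2 -> E (ph d).1 (ph d).2.
Proof. by case: d => a b /= H; rewrite /phi /= H /=; apply: s1. Qed.

Lemma CUT u v : E u v -> fconnect ph (u, v) (v, u).
Proof.
move=> Huv; apply/negPn/negP => Hno.
set B := connect (Eexc E u v) v.
have HuB : ~~ B u by apply: ACY.
have inv : forall p d0, E d0.1 d0.2 -> B d0.2 -> fconnect ph (u, v) d0 ->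
    path (frel ph) d0 p -> E (last d0 p).1 (last d0 p).2 /\ B (last d0 p).2.
  elim=> [|x p IH] d0 Hd Hb Hc /=; first by [].
  case/andP => /eqP Hx Hp. apply: IH Hp.
  - by rewrite -Hx; apply: phi_dart.
  - move: Hd Hb Hc Hx; case: d0 => a b /= Hd Hb Hc; rewrite /phi /= Hd => <- /=.
    case: (boolP ((b == u) && (sg b a == v) || (b == v) && (sg b a == u))).
    + case/orP => /andP [/eqP eb /eqP es].
      * by move: HuB; rewrite -eb Hb.
      * exfalso; apply: (negP Hno); apply: connect_trans Hc _.
        by apply: connect1; rewrite /= /phi /= Hd -eb -es.
    + move=> Hne; apply: connect_trans Hb _; apply: connect1.
      by rewrite /Eexc /= (s1 Hd) Hne.
  - by rewrite -Hx; apply: connect_trans Hc (connect1 _); rewrite /= eqxx.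
set w := finv ph (u, v).
have Hw : fconnect ph (u, v) w by apply: fconnect_finv.
have Hw2 : ph w = (u, v) by rewrite /w f_finv //; apply: phi_inj.
case/connectP: Hw => p Hp Hl.
have [Hd Hb] := inv p (u, v) Huv (connect0 _ _) (connect0 _ _) Hp.
move: Hd Hb; rewrite -Hl => Hd Hb.
move: Hw2; rewrite /phi Hd; case: (w) Hb => a b /= Hb [eb _].
by move: HuB; rewrite -eb Hb.
Qed.

Lemma VC d0 j i : E i j -> fconnect ph d0 (i, j) ->
  forall k, E k j -> fconnect ph d0 (k, j).
Proof.
move=> Hij Hc k Hk.
have H := @s3 j (fun k => E k j /\ fconnect ph d0 (k, j)) i (conj Hij Hc).
suff: E k j /\ fconnect ph d0 (k, j) by case.
apply: H k Hk.
- by move=> x [].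
- move=> x [Hx Hcx]; split; first by rewrite Esym s1.
  apply: connect_trans Hcx _; apply: connect_trans (CUT (s1 Hx)).
  by apply: connect1; rewrite /= /phi /= Hx.
Qed.

Lemma connect_ind_path (e : rel 'I_n) (P : 'I_n -> Prop) x y :
  connect e x y -> P x -> (forall a b, e a b -> P a -> P b) -> P y.
Proof.
case/connectP => p Hp -> HP Hstep.
elim: p x Hp HP => [|z p IH] x //= /andP [Hxz Hp] HP.
by apply: IH Hp (Hstep _ _ Hxz HP).
Qed.

Theorem all_connected d1 d2 : E d1.1 d1.2 -> E d2.1 d2.2 -> fconnect ph d1 d2.
Proof.
case: d1 => a b; case: d2 => x y /= Hab Hxy.
have Hc : connect E b y by case: Tree => H _; apply: H.
have Q : forall z, (forall w, E w z -> fconnect ph (a, b) (w, z)) ->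
  fconnect ph (a, b) (x, y) -> True by [].
suff: forall w, E w y -> fconnect ph (a, b) (w, y) by move=> H; apply: H.
apply: (connect_ind_path (P := fun z => forall w, E w z -> fconnect ph (a, b) (w, z))) Hc _ _.
- by apply: VC Hab (connect0 _ _).
- move=> z z' Hzz' Hz.
  have H1 : fconnect ph (a, b) (z', z) by apply: Hz; rewrite Esym.
  have H2 : fconnect ph (a, b) (z, z') by apply: connect_trans H1 (CUT _); rewrite Esym.
  by apply: VC Hzz' H2.
Qed.

End Comb.

Local Open Scope R_scope.

Lemma fconn_ring n (c : 'I_n -> point) eps (E : rel 'I_n) (g : 'I_n -> R) :
  Good c eps E g -> forall d1 d2, E d1.1 d1.2 ->
  fconnect (phi E (sg c E g)) d1 d2 -> same_ring c E g d1 d2.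
Proof.
move=> HG d1 d2 H1 /connectP [p Hp ->].
elim: p d1 H1 Hp => [|x p IH] d1 H1 /=; first by move=> _; apply: rt_refl.
case/andP => /eqP Hx Hp.
have Hd : E x.1 x.2.
  rewrite -Hx; case: d1 H1 {Hx} => a b /= H1; rewrite /phi /= H1 /=.
  by case: (sg_spec c g (Esymm HG H1)).
eapply rt_trans; [|exact (IH x Hd Hp)].
apply rt_step. rewrite -Hx; case: d1 H1 {Hx Hd} => a b /= H1.
have -> : phi E (sg c E g) (a, b) = (b, sg c E g b a) by rewrite /phi /= H1.
exact: (ring_step_sg HG H1).
Qed.

Theorem lemma7 (n : nat) (c : 'I_n -> point) (eps : R)
  (E : rel 'I_n) (f g : 'I_n -> R) :
  pairwise_disjoint c ->
  Rlt 0 eps -> Rlt eps (1 / 2) ->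
  SCS c eps E f g ->
  is_tree E ->
  single_ring c E g.
Proof.
move=> Hd He0 He1 [[Es [Ei [Ep Ec]]] [Hsch _]] Ht.
have HG : Good c eps E g.
  split; first done. split; first done. split; first done. split; first done.
  split; first done.
  by move=> i; case: (Hsch i).
move=> d1 d2 H1 H2.
apply: (@fconn_ring _ _ _ _ _ HG d1 d2 H1).
apply: (all_connected Es Ei Ht _ _ _ H1 H2).
- by move=> i j H; case: (sg_spec c g (Esymm HG H)).
- by move=> j i i' Hi Hi' e; apply: (sg_inj HG Hi Hi' e).
- by move=> j S i0 HS0 HSE HSc k Hk; apply: (sg_cyc HG HS0 HSE HSc Hk).
Qed.
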